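(* Assume $q\neq0$. For every integer $n$, $$h_{n-2}h_{n-1}h_{n+1}h_{n+2}-h_n^4=Ed^2q^{n-2}\left[\left(p^2+q\right)h_n^2+Ed^2p^2q^{n-1}\right].$$
   Context: Let $p,q,a,b$ be complex numbers with $q\neq0$, let $d^2=p^2-4q$ and $E=b^2-abp+a^2q$. The Horadam-Lucas sequence $(h_n)$ is defined by $h_0=2b-ap$, $h_1=bp-2aq$, $h_n=ph_{n-1}-qh_{n-2}$. It is extended to all integer indices by $h_{n-2}=(ph_{n-1}-h_n)/q$. *)

(* Defs.v *)
From HB Require Import structures.
From mathcomp Require Import all_boot all_order all_algebra.
From mathcomp Require Import complex.
Set Implicit Arguments. Unset Strict Implicit. Unset Printing Implicit Defensive.
Import Order.TTheory GRing.Theory Num.Theory.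
Local Open Scope ring_scope.

Section Horadam.
Variable F : fieldType.
Variables p q a b : F.

(* forward: pair (h_n, h_{n+1}) for n : nat *)
Fixpoint hfwd (n : nat) : F * F :=
  match n with
  | 0%N => (2 * b - a * p, b * p - 2 * a * q)
  | k.+1 => let: (x, y) := hfwd k in (y, p * y - q * x)
  end.

(* backward: pair (h_{-n}, h_{-n+1}) for n : nat, via h_{m-2} = (p h_{m-1} - h_m)/q *)
Fixpoint hbwd (n : nat) : F * F :=
  match n with
  | 0%N => (2 * b - a * p, b * p - 2 * a * q)
  | k.+1 => let: (x, y) := hbwd k in ((p * x - y) / q, x)
  end.

Definition hl (n : int) : F :=
  match n with
  | Posz k => (hfwd k).1
  | Negz k => (hbwd k.+1).1
  end.
End Horadam.

(* Main.v *)
Require Import Defs.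
From HB Require Import structures.
From mathcomp Require Import all_boot all_order all_algebra.
From mathcomp Require Import complex ring zify.
Import Order.TTheory GRing.Theory Num.Theory.
Local Open Scope ring_scope.


Section S.
Variable F : fieldType.
Variables p q a b : F.
Hypothesis q0 : q != 0.
Let h := hl p q a b.

Lemma fwdS k : (hfwd p q a b k.+1) = ((hfwd p q a b k).2, p * (hfwd p q a b k).2 - q * (hfwd p q a b k).1).
Proof. by rewrite /=; case: (hfwd p q a b k). Qed.
Lemma bwdS k : (hbwd p q a b k.+1) = ((p * (hbwd p q a b k).1 - (hbwd p q a b k).2) / q, (hbwd p q a b k).1).
Proof. by rewrite /=; case: (hbwd p q a b k). Qed.

Lemma rec (m : int) : h (m + 2) = p * h (m + 1) - q * h m.
Proof.
case: m => [k|[|[|k]]].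
- have -> : Posz k + 2 = Posz k.+2 by lia.
  have -> : Posz k + 1 = Posz k.+1 by lia.
  by rewrite /h /hl !fwdS.
- have -> : Negz 0 + 2 = 1 by []. have -> : Negz 0 + 1 = 0 by [].
  rewrite /h /hl bwdS /=. field. done.
- have -> : Negz 1 + 2 = 0 by []. have -> : Negz 1 + 1 = Negz 0 by [].
  rewrite /h /hl !bwdS /=. field. done.
- have -> : Negz k.+2 + 2 = Negz k by lia.
  have -> : Negz k.+2 + 1 = Negz k.+1 by lia.
  rewrite /h /hl [hbwd _ _ _ _ k.+3]bwdS [hbwd _ _ _ _ k.+2]bwdS /=. field. done.
Qed.

Let W (m : int) := h (m + 1) ^+ 2 - p * h m * h (m + 1) + q * h m ^+ 2.

Lemma WS m : W (m + 1) = q * W m.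
Proof. have e : m + 1 + 1 = m + 2 by rewrite -addrA. rewrite /W e rec. ring. Qed.

Lemma Wpow m : W m = q ^ m * W 0.
Proof.
case: m => k.
- elim: k => [|k IH]; first by rewrite expr0z mul1r.
  have -> : Posz k.+1 = Posz k + 1 by lia. rewrite WS IH expfzDr // expr1z; ring.
- have H : forall k : nat, W (- (k%:Z)) = q ^ (- (k%:Z)) * W 0.
    elim=> [|j IH]; first by rewrite oppr0 expr0z mul1r.
    have e : - (j%:Z) = - (j.+1%:Z) + 1 by lia.
    move: IH; rewrite e WS expfzDr // expr1z => IH.
    apply: (mulfI q0). rewrite IH; ring.
  by rewrite NegzE H.
Qed.

Lemma W0E : W 0 = - ((b ^+ 2 - a * b * p + a ^+ 2 * q) * (p ^+ 2 - 4%:R * q)).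
Proof. rewrite /W /h /=. ring. Qed.
Lemma main_gen (n : int) :
  let d2 := p ^+ 2 - 4%:R * q in
  let E := b ^+ 2 - a * b * p + a ^+ 2 * q in
  h (n - 2) * h (n - 1) * h (n + 1) * h (n + 2) - h n ^+ 4
  = E * d2 * q ^ (n - 2)
    * ((p ^+ 2 + q) * h n ^+ 2 + E * d2 * p ^+ 2 * q ^ (n - 1)).
Proof.
move=> d2 E.
have r1 := rec (n - 1). have r2 := rec (n - 2).
have e1 : n - 1 + 2 = n + 1 by rewrite -addrA.
have e2 : n - 1 + 1 = n by rewrite -addrA addNr addr0.
have e3 : n - 2 + 2 = n by rewrite -addrA addNr addr0.
have e4 : n - 2 + 1 = n - 1 by rewrite -addrA.
rewrite e1 e2 in r1. rewrite e3 e4 in r2.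
have hm1 : h (n - 1) = (p * h n - h (n + 1)) / q.
  rewrite r1; field; done.
have hm2 : h (n - 2) = (p * h (n - 1) - h n) / q.
  rewrite r2; field; done.
have Q2 : q ^ (n - 2) = q ^ n / q ^+ 2.
  by rewrite expfzDr // -exprz_inv -invr_expz.
have Q1 : q ^ (n - 1) = q ^ n / q.
  by rewrite expfzDr // expN1z ?expr1z.
have key : E * d2 * q ^ n = - W n.
  rewrite Wpow W0E /E /d2; ring.
rewrite hm2 hm1 rec Q2 Q1.
transitivity (E * d2 * q ^ n / q ^+ 2 * ((p ^+ 2 + q) * h n ^+ 2 + E * d2 * q ^ n * p ^+ 2 / q)); last by field.
rewrite key /W. field. done.
Qed.
End S.

Local Open Scope complex_scope.
Theorem mainTheorem10 (R : rcfType) (p q a b : R[i]) (n : int) :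
  q != 0 ->
  let d2 := p ^+ 2 - 4%:R * q in
  let E := b ^+ 2 - a * b * p + a ^+ 2 * q in
  let h := hl p q a b in
  h (n - 2) * h (n - 1) * h (n + 1) * h (n + 2) - h n ^+ 4
  = E * d2 * q ^ (n - 2)
    * ((p ^+ 2 + q) * h n ^+ 2 + E * d2 * p ^+ 2 * q ^ (n - 1)).
Proof.
move=> q0; exact: (@main_gen _ p q a b q0 n).
Qed.
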